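(* Let $x,y\in\mathbb{H}^2$, let $e_1=(1,0)$, $e_2=(0,1)$, and define $$x'=\tfrac{x+y}{2}-\tfrac{|x-y|}{2}e_2,\quad y'=\tfrac{x+y}{2}+\tfrac{|x-y|}{2}e_2,\quad x''=\tfrac{x+y}{2}-\tfrac{|x-y|}{2}e_1,\quad y''=\tfrac{x+y}{2}+\tfrac{|x-y|}{2}e_1,$$ and assume $x'\in\mathbb{H}^2$ (so that $x',y',x'',y''\in\mathbb{H}^2$). Then $$\tilde\tau_{\mathbb{H}^2}(x'',y'')\le\tilde\tau_{\mathbb{H}^2}(x,y)\le\tilde\tau_{\mathbb{H}^2}(x',y').$$
   Context: $\mathbb{H}^2=\{(x_1,x_2)\in\mathbb{R}^2:x_2>0\}$ is the upper half plane. For a proper subdomain $D\subsetneq\mathbb{R}^n$ and $x,y\in D$, $\tilde\tau_D(x,y)=\log\big(1+\sup_{p\in\partial D}\frac{|x-y|}{\sqrt{|x-p||y-p|}}\big)$ (the scale invariant Cassinian metric). *)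

(* Defs.v *)
From Stdlib Require Import Reals Lra ClassicalEpsilon.
Open Scope R_scope.

Definition pt := (R * R)%type.

Definition padd (a b : pt) : pt := (fst a + fst b, snd a + snd b).
Definition psub (a b : pt) : pt := (fst a - fst b, snd a - snd b).
Definition pscale (c : R) (a : pt) : pt := (c * fst a, c * snd a).

Definition pnorm (a : pt) : R := sqrt (fst a ^ 2 + snd a ^ 2).
Definition pdist (a b : pt) : R := pnorm (psub a b).

Definition e1 : pt := (1, 0).
Definition e2 : pt := (0, 1).

Definition H2 (x : pt) : Prop := snd x > 0.

Definition boundary (D : pt -> Prop) (p : pt) : Prop :=
  forall eps, eps > 0 ->
    (exists q, D q /\ pdist p q < eps) /\ (exists q, ~ D q /\ pdist p q < eps).

(* Supremum of a set of reals (classical); meaningful when the set is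
   nonempty and bounded above, 0 otherwise. *)
Definition Rsup (E : R -> Prop) : R :=
  match excluded_middle_informative (bound E /\ exists x, E x) with
  | left H => proj1_sig (completeness E (proj1 H) (proj2 H))
  | right _ => 0
  end.

Definition tau_tilde (D : pt -> Prop) (x y : pt) : R :=
  ln (1 + Rsup (fun r => exists p, boundary D p /\
        r = pdist x y / sqrt (pdist x p * pdist y p))).

(* Main.v *)
Require Import Defs.
From Stdlib Require Import Reals.
From Stdlib Require Import Lra Psatz ClassicalEpsilon.
Open Scope R_scope.

Lemma Rsup_le (E : R -> Prop) K : (forall r, E r -> r <= K) -> 0 <= K -> Rsup E <= K.
Proof.
  intros HK H0. unfold Rsup.
  destruct (excluded_middle_informative _) as [H|H]; [|lra].
  destruct (completeness E _ _) as [s [ub lub]]. simpl. apply lub. intros r Hr; auto.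
Qed.

Lemma Rsup_ge (E : R -> Prop) r K : E r -> (forall r, E r -> r <= K) -> r <= Rsup E.
Proof.
  intros Hr HK. unfold Rsup.
  destruct (excluded_middle_informative _) as [H|H].
  - destruct (completeness E _ _) as [s [ub lub]]. simpl. apply ub; auto.
  - exfalso. apply H. split; [exists K; intros x Hx; auto | exists r; auto].
Qed.

Lemma dist_snd (p q : pt) : Rabs (snd p - snd q) <= pdist p q.
Proof.
  unfold pdist, pnorm, psub; simpl.
  rewrite <- sqrt_Rsqr_abs. apply sqrt_le_1_alt. unfold Rsqr. simpl. pose proof (pow2_ge_0 (fst p - fst q)). nra.
Qed.

Lemma bd_iff (p : pt) : boundary H2 p <-> snd p = 0.
Proof.
  split.
  - intros Hb. destruct (Rtotal_order (snd p) 0) as [Hn|[Hz|Hp]]; auto.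
    + destruct (Hb (- snd p)) as [[q [Hq Hd]] _]; [lra|].
      pose proof (dist_snd p q). unfold H2 in Hq.
      rewrite Rabs_left in H; lra.
    + destruct (Hb (snd p)) as [_ [q [Hq Hd]]]; [lra|].
      pose proof (dist_snd p q). unfold H2 in Hq.
      destruct (Rle_dec 0 (snd p - snd q)).
      * rewrite Rabs_right in H; lra.
      * rewrite Rabs_left in H; lra.
  - intros Hz eps He. destruct p as [p1 p2]; simpl in Hz; subst p2. split.
    + exists (p1, eps/2). split. unfold H2; simpl; lra.
      unfold pdist, pnorm, psub; simpl.
      match goal with |- sqrt ?a < _ => replace a with ((eps/2)*(eps/2)) by ring end. idtac.
      rewrite sqrt_square; lra.
    + exists (p1, -(eps/2)). split. unfold H2; simpl; lra.
      unfold pdist, pnorm, psub; simpl.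
      match goal with |- sqrt ?a < _ => replace a with ((eps/2)*(eps/2)) by ring end. idtac.
      rewrite sqrt_square; lra.
Qed.

Definition term (a b : pt) (t : R) := pdist a b / sqrt (pdist a (t,0) * pdist b (t,0)).

Lemma set_char (a b : pt) r :
  (exists p, boundary H2 p /\ r = pdist a b / sqrt (pdist a p * pdist b p)) <->
  exists t, r = term a b t.
Proof.
  split.
  - intros [[p1 p2] [Hb Hr]]. apply bd_iff in Hb. simpl in Hb. subst p2.
    exists p1; auto.
  - intros [t Ht]. exists (t,0). split; auto. apply bd_iff; reflexivity.
Qed.

Lemma compare (A1 A2 B1 B2 : pt) K K' t0 t1 :
  (forall t, term A1 A2 t <= K) -> 0 <= term A1 A2 t0 ->
  K <= term B1 B2 t1 -> (forall t, term B1 B2 t <= K') ->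
  tau_tilde H2 A1 A2 <= tau_tilde H2 B1 B2.
Proof.
  intros HA H0 HK HB. unfold tau_tilde.
  set (SA := fun r => exists p, boundary H2 p /\ r = pdist A1 A2 / sqrt (pdist A1 p * pdist A2 p)).
  set (SB := fun r => exists p, boundary H2 p /\ r = pdist B1 B2 / sqrt (pdist B1 p * pdist B2 p)).
  assert (HAs : forall r, SA r -> r <= K).
  { intros r Hr. apply set_char in Hr. destruct Hr as [t ->]. auto. }
  assert (HBs : forall r, SB r -> r <= K').
  { intros r Hr. apply set_char in Hr. destruct Hr as [t ->]. auto. }
  assert (S0 : SA (term A1 A2 t0)) by (apply set_char; eauto).
  assert (S1 : SB (term B1 B2 t1)) by (apply set_char; eauto).
  pose proof (Rsup_ge SA _ K S0 HAs).
  pose proof (Rsup_ge SB _ K' S1 HBs).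
  pose proof (HA t0).
  pose proof (Rsup_le SA K HAs ltac:(lra)).
  destruct (Rle_lt_or_eq_dec (1 + Rsup SA) (1 + Rsup SB)) as [Hl|He]; [lra| |].
  - left. apply ln_increasing; lra.
  - rewrite He; lra.
Qed.

Lemma term_le d P1 P2 Lb : 0 <= d -> 0 < Lb -> Lb * Lb <= P1 * P2 -> 0 <= P1 -> 0 <= P2 ->
  d / sqrt (sqrt P1 * sqrt P2) <= d / sqrt Lb.
Proof.
  intros Hd HL HP H1 H2'. rewrite <- sqrt_mult by auto.
  assert (Lb <= sqrt (P1 * P2)).
  { rewrite <- (sqrt_square Lb) by lra. apply sqrt_le_1_alt; auto. }
  unfold Rdiv. apply Rmult_le_compat_l; auto.
  apply Rinv_le_contravar. apply sqrt_lt_R0; auto. apply sqrt_le_1_alt; auto.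
Qed.

Lemma term_ge d P1 P2 Lb : 0 <= d -> 0 < P1 -> 0 < P2 -> P1 * P2 <= Lb * Lb -> 0 <= Lb ->
  d / sqrt Lb <= d / sqrt (sqrt P1 * sqrt P2).
Proof.
  intros Hd H1 H2' HP HL. rewrite <- sqrt_mult by lra.
  assert (sqrt (P1 * P2) <= Lb).
  { rewrite <- (sqrt_square Lb) by lra. apply sqrt_le_1_alt; auto. }
  assert (0 < sqrt (P1 * P2)) by (apply sqrt_lt_R0; nra).
  unfold Rdiv. apply Rmult_le_compat_l; auto.
  apply Rinv_le_contravar. apply sqrt_lt_R0; auto. apply sqrt_le_1_alt; auto.
Qed.

Lemma pdist_pt u1 u2 v1 v2 : pdist (u1,u2) (v1,v2) = sqrt ((u1-v1)^2 + (u2-v2)^2).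
Proof. reflexivity. Qed.

Theorem lemma3p11 (x y : pt) (hx : H2 x) (hy : H2 y)
  (hx' : H2 (psub (pscale (1/2) (padd x y)) (pscale (pdist x y / 2) e2))) :
  let m := pscale (1/2) (padd x y) in
  let x' := psub m (pscale (pdist x y / 2) e2) in
  let y' := padd m (pscale (pdist x y / 2) e2) in
  let x'' := psub m (pscale (pdist x y / 2) e1) in
  let y'' := padd m (pscale (pdist x y / 2) e1) in
  tau_tilde H2 x'' y'' <= tau_tilde H2 x y /\ tau_tilde H2 x y <= tau_tilde H2 x' y'.
Proof.
  cbv zeta.
  destruct x as [a1 a2], y as [b1 b2]. unfold H2 in hx, hy, hx'; simpl in hx, hy.
  set (d := pdist (a1,a2) (b1,b2)) in *.
  assert (Hd : d = sqrt ((a1-b1)^2 + (a2-b2)^2)) by reflexivity.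
  assert (Hd0 : 0 <= d) by (rewrite Hd; apply sqrt_pos).
  assert (Hd2 : d * d = (a1-b1)^2 + (a2-b2)^2) by (rewrite Hd; apply sqrt_sqrt; pose proof (pow2_ge_0 (a1-b1)); pose proof (pow2_ge_0 (a2-b2)); lra).
  set (M1 := (a1+b1)/2). set (M2 := (a2+b2)/2).
  assert (HM : M2 - d/2 > 0) by (unfold M2; simpl in hx'; lra).
  assert (E1 : psub (pscale (1/2) (padd (a1,a2) (b1,b2))) (pscale (d/2) e1) = (M1 - d/2, M2))
    by (unfold psub, pscale, padd, e1, M1, M2; simpl; f_equal; field).
  assert (E2 : padd (pscale (1/2) (padd (a1,a2) (b1,b2))) (pscale (d/2) e1) = (M1 + d/2, M2))
    by (unfold psub, pscale, padd, e1, M1, M2; simpl; f_equal; field).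
  assert (E3 : psub (pscale (1/2) (padd (a1,a2) (b1,b2))) (pscale (d/2) e2) = (M1, M2 - d/2))
    by (unfold psub, pscale, padd, e2, M1, M2; simpl; f_equal; field).
  assert (E4 : padd (pscale (1/2) (padd (a1,a2) (b1,b2))) (pscale (d/2) e2) = (M1, M2 + d/2))
    by (unfold psub, pscale, padd, e2, M1, M2; simpl; f_equal; field).
  rewrite E1, E2, E3, E4. clear E1 E2 E3 E4 hx'.
  set (L := (M2 - d/2) * (M2 + d/2)).
  assert (HL : 0 < L) by (unfold L; nra).
  assert (P1 : forall t, term (a1,a2) (b1,b2) t <= d / sqrt L).
  { intros t. unfold term. fold d. rewrite !pdist_pt.
    apply term_le; auto; try (apply Rplus_le_le_0_compat; apply pow2_ge_0); try nra.
    set (w1 := M1 - t). set (u1 := (a1-b1)/2). set (u2 := (a2-b2)/2).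
    assert (Hid : ((a1 - t) ^ 2 + (a2 - 0) ^ 2) * ((b1 - t) ^ 2 + (b2 - 0) ^ 2) =
      (w1*w1 + M2*M2 - (u1*u1+u2*u2))^2 + 4 * (w1*u2 - M2*u1)^2)
      by (unfold w1, u1, u2, M1, M2; field).
    rewrite Hid.
    assert (HU : u1*u1+u2*u2 = d*d/4) by (unfold u1, u2; rewrite Hd2; field).
    assert (HX : L <= w1*w1 + M2*M2 - (u1*u1+u2*u2)) by (rewrite HU; unfold L; nra).
    pose proof (pow2_ge_0 (w1*u2 - M2*u1)).
    assert (L*L <= (w1*w1 + M2*M2 - (u1*u1+u2*u2))*(w1*w1 + M2*M2 - (u1*u1+u2*u2))) by (apply Rmult_le_compat; lra).
    simpl. lra. }
  split.
  - apply (compare _ _ _ _ (d / sqrt ((d/2)*(d/2) + M2*M2)) (d / sqrt L) M1 M1).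
    + intros t. unfold term.
      assert (pdist (M1 - d / 2, M2) (M1 + d / 2, M2) = d).
      { rewrite pdist_pt. replace ((M1 - d / 2 - (M1 + d / 2)) ^ 2 + (M2 - M2) ^ 2) with (d*d) by field.
        apply sqrt_square; auto. }
      rewrite H. rewrite !pdist_pt. apply term_le; auto; try (apply Rplus_le_le_0_compat; apply pow2_ge_0); try nra.
      set (s := M1 - t).
      replace ((M1 - d / 2 - t) ^ 2 + (M2 - 0) ^ 2) with ((s - d/2)^2 + M2*M2) by (unfold s; field).
      replace ((M1 + d / 2 - t) ^ 2 + (M2 - 0) ^ 2) with ((s + d/2)^2 + M2*M2) by (unfold s; field).
      assert (0 <= s*s*s*s) by nra.
      assert (0 <= s*s*(M2*M2 - (d/2)*(d/2))) by (apply Rmult_le_pos; nra).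
      nra.
    + unfold term. apply Rmult_le_pos; [apply sqrt_pos|].
      apply Rlt_le, Rinv_0_lt_compat, sqrt_lt_R0. rewrite !pdist_pt.
      apply Rmult_lt_0_compat; apply sqrt_lt_R0; apply Rplus_le_lt_0_compat; try apply pow2_ge_0; nra.
    + unfold term. fold d. rewrite !pdist_pt. apply term_ge; auto; try (apply Rplus_le_lt_0_compat; [apply pow2_ge_0|]); try nra.
      set (u1 := (a1-b1)/2). set (u2 := (a2-b2)/2).
      assert (Hid : ((a1 - M1) ^ 2 + (a2 - 0) ^ 2) * ((b1 - M1) ^ 2 + (b2 - 0) ^ 2) =
        (M2*M2 + (u1*u1+u2*u2))^2 - 4 * (M2*u2)^2)
        by (unfold u1, u2, M1, M2; field).
      rewrite Hid.
      assert (HU : u1*u1+u2*u2 = d*d/4) by (unfold u1, u2; rewrite Hd2; field).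
      rewrite HU. nra.
    + exact P1.
  - apply (compare _ _ _ _ (d / sqrt L) (d / sqrt L) M1 M1).
    + exact P1.
    + unfold term. apply Rmult_le_pos; [apply sqrt_pos|].
      apply Rlt_le, Rinv_0_lt_compat, sqrt_lt_R0. rewrite !pdist_pt.
      apply Rmult_lt_0_compat; apply sqrt_lt_R0; apply Rplus_le_lt_0_compat; try apply pow2_ge_0; nra.
    + unfold term.
      assert (pdist (M1, M2 - d/2) (M1, M2 + d / 2) = d).
      { rewrite pdist_pt. replace ((M1 - M1) ^ 2 + (M2 - d/2 - (M2 + d / 2)) ^ 2) with (d*d) by field.
        apply sqrt_square; auto. }
      rewrite H. rewrite !pdist_pt. apply term_ge; auto; try (apply Rplus_le_lt_0_compat; [apply pow2_ge_0|]); try nra.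
      unfold L. nra.
    + intros t. unfold term.
      assert (pdist (M1, M2 - d/2) (M1, M2 + d / 2) = d).
      { rewrite pdist_pt. replace ((M1 - M1) ^ 2 + (M2 - d/2 - (M2 + d / 2)) ^ 2) with (d*d) by field.
        apply sqrt_square; auto. }
      rewrite H. rewrite !pdist_pt. apply term_le; auto; try (apply Rplus_le_le_0_compat; apply pow2_ge_0); try nra.
      unfold L.
      pose proof (pow2_ge_0 (M1-t)).
      replace (M2 - d / 2 - 0) with (M2 - d/2) by ring.
      replace (M2 + d / 2 - 0) with (M2 + d/2) by ring.
      pose proof (pow2_ge_0 (M2 - d/2)).
      replace ((M2 - d / 2) * (M2 + d / 2) * ((M2 - d / 2) * (M2 + d / 2)))
        with ((M2 - d/2)^2 * (M2 + d/2)^2) by field.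
      apply Rmult_le_compat; try apply pow2_ge_0; lra.
Qed.
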